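(* Let $G$ be a finite group and $T$ a $G$-transfer system. Then $\mathrm{Hull}(T)=T_c$ if and only if $T$ is connected (has exactly one connected component).
   Context: A $G$-transfer system is a partial order $\to$ on the set of subgroups of $G$ such that: $K\to H$ implies $K\le H$; $H\to H$ for all $H$; $L\to K$ and $K\to H$ imply $L\to H$; $K\to H$ implies $K\cap L\to H\cap L$ for every $L\le G$; $K\to H$ implies $gKg^{-1}\to gHg^{-1}$ for all $g\in G$. Connected components are those of the underlying undirected graph on the subgroups of $G$ with edges $K\to H$. $T_c$ denotes the complete transfer system, containing $K\to H$ for all $K\le H\le G$. A transfer system is saturated if whenever $L\le K\le H$ and $L\to H$ is in it, then $K\to H$ is in it; $\mathrm{Hull}(T)$ is the smallest saturated $G$-transfer system containing $T$. *)

(* Defs.v *)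
From mathcomp Require Import all_boot all_fingroup.
From Stdlib Require Import Relation_Operators.
Set Implicit Arguments. Unset Strict Implicit. Unset Printing Implicit Defensive.

Local Open Scope group_scope.

Definition subgrel (gT : finGroupType) := {group gT} -> {group gT} -> Prop.

Definition is_transfer_system (gT : finGroupType) (G : {group gT}) (T : subgrel gT) : Prop :=
  [/\ (forall K H, T K H -> K \subset H /\ H \subset G),
      (forall H : {group gT}, H \subset G -> T H H),
      (forall L K H, T L K -> T K H -> T L H),
      (forall K H L : {group gT}, L \subset G -> T K H -> T (K :&: L)%G (H :&: L)%G)
    & (forall K H g, g \in G -> T K H -> T (K :^ g)%G (H :^ g)%G)].

(* Antisymmetry follows from K \subset H, so partial-order-ness is captured. *)

Definition complete_ts (gT : finGroupType) (G : {group gT}) : subgrel gT :=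
  fun K H => K \subset H /\ H \subset G.

Definition saturated (gT : finGroupType) (T : subgrel gT) : Prop :=
  forall L K H : {group gT}, L \subset K -> K \subset H -> T L H -> T K H.

Definition Hull (gT : finGroupType) (G : {group gT}) (T : subgrel gT) : subgrel gT :=
  fun K H => forall S : subgrel gT,
    is_transfer_system G S -> saturated S -> (forall K' H', T K' H' -> S K' H') -> S K H.

(* T is connected: the undirected graph on the subgroups of G with edges K -> H
   has exactly one connected component (the vertex set is nonempty, as 1 <= G). *)
Definition ts_connected (gT : finGroupType) (G : {group gT}) (T : subgrel gT) : Prop :=
  forall H K : {group gT}, H \subset G -> K \subset G ->
    clos_refl_sym_trans {group gT} T H K.

(* Main.v *)
Require Import Defs.
From mathcomp Require Import all_boot all_fingroup.
From Stdlib Require Import Relation_Operators.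
Set Implicit Arguments. Unset Strict Implicit.
Local Open Scope group_scope.

Section Aux.
Variable gT : finGroupType.

Lemma geq (A B : {group gT}) : A :=: B -> A = B.
Proof. by move=> h; apply: val_inj. Qed.

Lemma clos_res (G : {group gT}) (T : subgrel gT) (L : {group gT}) :
  is_transfer_system G T -> L \subset G ->
  forall X Y, clos_refl_sym_trans _ T X Y ->
  clos_refl_sym_trans _ T (X :&: L)%G (Y :&: L)%G.
Proof.
move=> [_ _ _ hr _] hL X Y; elim=> {X Y}.
- by move=> X Y h; apply: rst_step; apply: hr.
- by move=> X; apply: rst_refl.
- by move=> X Y _ h; apply: rst_sym.
- by move=> X Y Z _ h1 _ h2; apply: rst_trans h2.
Qed.

Lemma clos_conj (G : {group gT}) (T : subgrel gT) g :
  is_transfer_system G T -> g \in G ->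
  forall X Y, clos_refl_sym_trans _ T X Y ->
  clos_refl_sym_trans _ T (X :^ g)%G (Y :^ g)%G.
Proof.
move=> [_ _ _ _ hc] hg X Y; elim=> {X Y}.
- by move=> X Y h; apply: rst_step; apply: hc.
- by move=> X; apply: rst_refl.
- by move=> X Y _ h; apply: rst_sym.
- by move=> X Y Z _ h1 _ h2; apply: rst_trans h2.
Qed.

Lemma sat_clos (G : {group gT}) (S : subgrel gT) :
  is_transfer_system G S -> saturated S ->
  forall A B, clos_refl_sym_trans _ S A B ->
  (A \subset G \/ B \subset G) ->
  [/\ A \subset G, B \subset G, S (A :&: B)%G A & S (A :&: B)%G B].
Proof.
move=> hS hsat; have [hsub hrf htr hr _] := hS.
move=> A B; elim=> {A B}.
- move=> X Y h _; have [hXY hYG] := hsub _ _ h.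
  have hXG := subset_trans hXY hYG.
  have -> : (X :&: Y)%G = X by apply: geq; apply/setIidPl.
  by split=> //; apply: hrf.
- move=> X hX; have hXG : X \subset G by case: hX.
  have -> : (X :&: X)%G = X by apply: geq; apply: setIid.
  by split=> //; apply: hrf.
- move=> X Y _ ih hor.
  have [hX hY s1 s2] : [/\ X \subset G, Y \subset G, S (X :&: Y)%G X & S (X :&: Y)%G Y].
    by apply: ih; case: hor; [right|left].
  have e : (X :&: Y)%G = (Y :&: X)%G by apply: geq; apply: setIC.
  by rewrite e in s1 s2; split.
- move=> A B C _ ih1 _ ih2 hor.
  have [hA hB s1 s1'] : [/\ A \subset G, B \subset G, S (A :&: B)%G A & S (A :&: B)%G B].
    case: hor => h; first by apply: ih1; left.
    by have [hB _ _ _] := ih2 (or_intror h); apply: ih1; right.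
  have [_ hC s2 s2'] := ih2 (or_introl hB).
  split=> //.
  - have r := hr _ _ _ hA s2.
    have e : (B :&: A)%G = (A :&: B)%G by apply: geq; apply: setIC.
    rewrite e in r; have t := htr _ _ _ r s1.
    apply: (hsat _ _ _ _ _ t); rewrite /=.
      by apply/subsetP=> x; rewrite !inE => /andP[/andP[_ ->] ->].
    exact: subsetIl.
  - have r := hr _ _ _ hC s1'.
    have t := htr _ _ _ r s2'.
    apply: (hsat _ _ _ _ _ t); rewrite /=.
      by apply/subsetP=> x; rewrite !inE => /andP[/andP[-> _] ->].
    exact: subsetIr.
Qed.
End Aux.

Theorem mainTheorem3 (gT : finGroupType) (G : {group gT}) (T : subgrel gT) :
  is_transfer_system G T ->
  ((forall K H : {group gT}, Hull G T K H <-> complete_ts G K H) <-> ts_connected G T).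
Proof.
move=> hT; have [tsub trf ttr tr tc] := hT; split.
- move=> hE H K hH hK.
  pose S : subgrel gT := fun K H => [/\ K \subset H, H \subset G & clos_refl_sym_trans _ T K H].
  have hS : is_transfer_system G S.
    split.
    + by move=> X Y [].
    + by move=> X hX; split=> //; apply: rst_refl.
    + move=> X Y Z [h1 _ c1] [h2 h3 c2]; split.
      * exact: subset_trans h1 h2.
      * exact: h3.
      * exact: rst_trans c2.
    + move=> X Y L hL [h1 h2 c]; split.
      * exact: setSI.
      * exact: subset_trans (subsetIr _ _) hL.
      * exact: (clos_res hT hL c).
    + move=> X Y g hg [h1 h2 c]; split.
      * by rewrite conjSg.
      * by rewrite -(conjGid hg) conjSg.
      * exact: (clos_conj hT hg c).
  have hsat : saturated S.
    move=> L K' H' hLK hKH [_ hHG c]; split=> //.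
    have hKG := subset_trans hKH hHG.
    have c' := clos_res hT hKG c.
    have e1 : (L :&: K')%G = L by apply: geq; apply/setIidPl.
    have e2 : (H' :&: K')%G = K' by apply: geq; apply/setIidPr.
    rewrite e1 e2 in c'.
    exact: rst_trans (rst_sym _ _ _ _ c') c.
  have toG : forall X : {group gT}, X \subset G -> clos_refl_sym_trans _ T X G.
    move=> X hX.
    have [] : S X G.
      apply: (proj2 (hE X G)). by split.
      exact: hS.
      exact: hsat.
      move=> K' H' h; have [a b] := tsub _ _ h; split=> //; exact: rst_step.
    by [].
  exact: rst_trans (toG _ hH) (rst_sym _ _ _ _ (toG _ hK)).
- move=> hc K H; split.
  + move=> h; apply: h.
    * split.
      -- by [].
      -- by move=> X hX; split.
      -- move=> X Y Z [a _] [b c]; split=> //; exact: subset_trans b.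
      -- move=> X Y L hL [a b]; split; first exact: setSI.
         exact: subset_trans (subsetIr _ _) hL.
      -- move=> X Y g hg [a b]; split; first by rewrite conjSg.
         by rewrite -(conjGid hg) conjSg.
    * move=> L X Y hLX hXY [_ hY]; by split.
    * exact: tsub.
  + move=> [hKH hHG] S hS hsat hTS.
    have hKG := subset_trans hKH hHG.
    have c : clos_refl_sym_trans _ S K H.
      have := hc K H hKG hHG; elim=> {K H hKH hHG hKG}.
      * by move=> X Y h; apply: rst_step; apply: hTS.
      * by move=> X; apply: rst_refl.
      * by move=> X Y _ h; apply: rst_sym.
      * by move=> X Y Z _ h1 _ h2; apply: rst_trans h2.
    have [_ _ _ s] := sat_clos hS hsat c (or_introl hKG).
    have e : (K :&: H)%G = K by apply: geq; apply/setIidPl.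
    by rewrite e in s.
Qed.
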